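(* Let $\Sigma$ be a symmetric invertible $p\times p$ matrix, $\mathbf b\in\mathbb R^p$, $\boldsymbol\theta=\Sigma^{-1}\mathbf b$, let $\hat S_n$ be any $p\times p$ matrix and $\hat{\mathbf b}\in\mathbb R^p$, and let $\lambda\ge|\boldsymbol\theta|_1|\hat S_n-\Sigma|_\infty+|\hat{\mathbf b}-\mathbf b|_\infty$. Then $|\hat S_n\boldsymbol\theta-\hat{\mathbf b}|_\infty\le\lambda$, and every solution $\hat{\boldsymbol\theta}$ of $\min_{\boldsymbol\eta\in\mathbb R^p}\{|\boldsymbol\eta|_1:|\hat S_n\boldsymbol\eta-\hat{\mathbf b}|_\infty\le\lambda\}$ satisfies, for all $1\le w\le\infty$, $$|\hat{\boldsymbol\theta}-\boldsymbol\theta|_w\le\big[6D(5\lambda|\Sigma^{-1}|_{L^1})\big]^{1/w}\big(2\lambda|\Sigma^{-1}|_{L^1}\big)^{1-1/w}.$$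
   Context: $|M|_\infty=\max_{j,k}|m_{jk}|$ for a matrix $M$; $|M|_{L^1}=\max_k\sum_j|m_{jk}|$; $|\mathbf a|_w=(\sum_j|a_j|^w)^{1/w}$, $|\mathbf a|_\infty=\max_j|a_j|$; $D(u)=\sum_{j=1}^p(|\theta_j|\wedge u)$ for $u\ge0$. *)

(* Defs.v *)
From Stdlib Require Import Reals Lra.
Open Scope R_scope.

(* Vectors in R^p are functions nat -> R (only indices 0..p-1 matter);
   p x p matrices are functions nat -> nat -> R (row index first). *)

Fixpoint sumR (n : nat) (f : nat -> R) : R :=
  match n with O => 0 | S k => sumR k f + f k end.

(* max_{i < n} f i, with value 0 on the empty range (used only for
   nonnegative quantities). *)
Fixpoint maxR (n : nat) (f : nat -> R) : R :=
  match n with O => 0 | S k => Rmax (maxR k f) (f k) end.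

(* Real power x^y for x >= 0 with the conventions 0^y = 0 (y > 0), 0^0 = 1. *)
Definition rpow (x y : R) : R :=
  if Req_EM_T x 0 then (if Req_EM_T y 0 then 1 else 0) else Rpower x y.

Definition matvec (p : nat) (M : nat -> nat -> R) (v : nat -> R) : nat -> R :=
  fun j => sumR p (fun k => M j k * v k).
Definition matmul (p : nat) (A B : nat -> nat -> R) : nat -> nat -> R :=
  fun i j => sumR p (fun k => A i k * B k j).
Definition idm (i j : nat) : R := if Nat.eqb i j then 1 else 0.

Definition mx_inf (p : nat) (M : nat -> nat -> R) : R :=
  maxR p (fun j => maxR p (fun k => Rabs (M j k))).
Definition mx_L1 (p : nat) (M : nat -> nat -> R) : R :=
  maxR p (fun k => sumR p (fun j => Rabs (M j k))).
Definition vnorm (p : nat) (w : R) (a : nat -> R) : R :=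
  rpow (sumR p (fun j => rpow (Rabs (a j)) w)) (/ w).
Definition vnorm1 (p : nat) (a : nat -> R) : R := sumR p (fun j => Rabs (a j)).
Definition vnorm_inf (p : nat) (a : nat -> R) : R := maxR p (fun j => Rabs (a j)).

Definition Dfun (p : nat) (theta : nat -> R) (u : R) : R :=
  sumR p (fun j => Rmin (Rabs (theta j)) u).

Definition vsub (a b : nat -> R) : nat -> R := fun j => a j - b j.
Definition msub (A B : nat -> nat -> R) : nat -> nat -> R := fun i j => A i j - B i j.

Definition feasible (p : nat) (S : nat -> nat -> R) (bh : nat -> R) (lam : R)
  (eta : nat -> R) : Prop :=
  vnorm_inf p (vsub (matvec p S eta) bh) <= lam.

Definition is_solution (p : nat) (S : nat -> nat -> R) (bh : nat -> R) (lam : R)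
  (thh : nat -> R) : Prop :=
  feasible p S bh lam thh /\
  forall eta, feasible p S bh lam eta -> vnorm1 p thh <= vnorm1 p eta.

(* Main.v *)
Require Import Defs.
From Stdlib Require Import Reals Lra Lia.
Open Scope R_scope.

Lemma sumR_ext n f g : (forall i, (i<n)%nat -> f i = g i) -> sumR n f = sumR n g.
Proof. induction n; simpl; intros H; [reflexivity|]. rewrite IHn by (intros; apply H; lia). rewrite (H n) by lia. reflexivity. Qed.
Lemma sumR_le n f g : (forall i, (i<n)%nat -> f i <= g i) -> sumR n f <= sumR n g.
Proof. induction n; simpl; intros H; [lra|]. assert (H1 := H n ltac:(lia)). assert (H2 := IHn ltac:(intros; apply H; lia)). lra. Qed.
Lemma sumR_plus n f g : sumR n (fun i => f i + g i) = sumR n f + sumR n g.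
Proof. induction n; simpl; [lra|]. rewrite IHn; ring. Qed.
Lemma sumR_minus n f g : sumR n (fun i => f i - g i) = sumR n f - sumR n g.
Proof. induction n; simpl; [lra|]. rewrite IHn; ring. Qed.
Lemma sumR_scal n c f : sumR n (fun i => c * f i) = c * sumR n f.
Proof. induction n; simpl; [lra|]. rewrite IHn; ring. Qed.
Lemma sumR_scal_r n c f : sumR n (fun i => f i * c) = sumR n f * c.
Proof. induction n; simpl; [lra|]. rewrite IHn; ring. Qed.
Lemma sumR_zero n : sumR n (fun _ => 0) = 0.
Proof. induction n; simpl; [lra|]. rewrite IHn; ring. Qed.
Lemma sumR_swap n m f : sumR n (fun i => sumR m (fun j => f i j)) = sumR m (fun j => sumR n (fun i => f i j)).
Proof. induction n; simpl. - symmetry; apply sumR_zero. - rewrite IHn, sumR_plus. reflexivity. Qed.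
Lemma Rabs_sumR n f : Rabs (sumR n f) <= sumR n (fun i => Rabs (f i)).
Proof. induction n; simpl. - rewrite Rabs_R0; lra. - eapply Rle_trans; [apply Rabs_triang|]. lra. Qed.
Lemma sumR_nonneg n f : (forall i, (i<n)%nat -> 0 <= f i) -> 0 <= sumR n f.
Proof. intros H. rewrite <- (sumR_zero n). apply sumR_le. auto. Qed.
Lemma maxR_ge0 n f : 0 <= maxR n f.
Proof. induction n; simpl; [lra|]. eapply Rle_trans; [apply IHn|apply Rmax_l]. Qed.
Lemma maxR_ge n f i : (i<n)%nat -> f i <= maxR n f.
Proof. induction n; simpl; intros H; [lia|]. destruct (Nat.eq_dec i n).
 - subst; apply Rmax_r. - eapply Rle_trans; [apply IHn; lia|apply Rmax_l]. Qed.
Lemma maxR_le n f c : 0 <= c -> (forall i, (i<n)%nat -> f i <= c) -> maxR n f <= c.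
Proof. induction n; simpl; intros Hc H; [lra|]. apply Rmax_lub; [apply IHn; auto|apply H; lia]. Qed.

Lemma sum_idm_l n j h : (j < n)%nat -> sumR n (fun l => idm j l * h l) = h j.
Proof. induction n; intros Hj; [lia|]. simpl. unfold idm at 2.
 destruct (Nat.eqb_spec j n).
 - subst. rewrite (sumR_ext _ _ (fun _ => 0)). rewrite sumR_zero; ring.
   intros i Hi. unfold idm. destruct (Nat.eqb_spec n i); [lia|ring].
 - rewrite IHn by lia. ring. Qed.
Lemma sum_idm_r n j h : (j < n)%nat -> sumR n (fun l => h l * idm l j) = h j.
Proof. intros Hj. rewrite <- (sum_idm_l n j h Hj). apply sumR_ext. intros i _.
 unfold idm. rewrite Nat.eqb_sym. ring. Qed.

Lemma matvec_assoc p A B v i : matvec p A (matvec p B v) i = matvec p (matmul p A B) v i.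
Proof. unfold matvec, matmul.
 rewrite (sumR_ext _ _ (fun k => sumR p (fun m => A i k * (B k m * v m)))).
 2:{ intros; symmetry; apply sumR_scal. }
 rewrite sumR_swap. apply sumR_ext. intros m _. rewrite <- sumR_scal_r. apply sumR_ext. intros; ring. Qed.

Lemma matvec_sub_v p M u v k : matvec p M (vsub u v) k = matvec p M u k - matvec p M v k.
Proof. unfold matvec, vsub. rewrite <- sumR_minus. apply sumR_ext; intros; ring. Qed.
Lemma matvec_sub_m p A B v k : matvec p (msub A B) v k = matvec p A v k - matvec p B v k.
Proof. unfold matvec, msub. rewrite <- sumR_minus. apply sumR_ext; intros; ring. Qed.

Lemma matvec_bound p M v j : (j<p)%nat -> Rabs (matvec p M v j) <= mx_inf p M * vnorm1 p v.
Proof. intros Hj. unfold matvec, vnorm1. eapply Rle_trans; [apply Rabs_sumR|].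
 rewrite <- sumR_scal. apply sumR_le. intros k Hk. rewrite Rabs_mult.
 apply Rmult_le_compat_r; [apply Rabs_pos|]. unfold mx_inf.
 eapply Rle_trans; [|apply (maxR_ge _ _ j Hj)]. apply (maxR_ge _ (fun k => Rabs (M j k)) k Hk). Qed.

Lemma cone_pt t s u : Rabs (s - t) <= u -> Rabs (s - t) <= 2 * Rmin (Rabs t) u + Rabs s - Rabs t.
Proof. intros H. assert (T1 := Rabs_triang s (-t)). assert (T2 := Rabs_triang (t - s) s).
 replace (t - s + s) with t in T2 by ring. rewrite Rabs_Ropp in T1. rewrite Rabs_minus_sym in T2.
 unfold Rmin. destruct (Rle_dec (Rabs t) u); unfold Rminus in *; lra. Qed.

Lemma rpow_nonneg x y : 0 <= rpow x y.
Proof. unfold rpow. destruct (Req_EM_T x 0); [destruct (Req_EM_T y 0); lra|]. unfold Rpower. left; apply exp_pos. Qed.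
Lemma Rpower_pos x y : 0 < Rpower x y.
Proof. unfold Rpower; apply exp_pos. Qed.

Lemma rpow_pt x a w : 1 <= w -> 0 <= x <= a -> rpow x w <= x * rpow a (w - 1).
Proof. intros Hw Hx. unfold rpow. destruct (Req_EM_T x 0).
 - destruct (Req_EM_T w 0); [lra|]. subst. assert (H:=rpow_nonneg a (w-1)). unfold rpow in H. lra.
 - destruct (Req_EM_T a 0); [lra|].
   replace w with (1 + (w - 1)) at 1 by ring. rewrite Rpower_plus, Rpower_1 by lra.
   apply Rmult_le_compat_l; [lra|]. apply Rle_Rpower_l; lra. Qed.
Lemma sinv_sym p (Sigma Sinv : nat -> nat -> R)
  (Hsym : forall i j, (i < p)%nat -> (j < p)%nat -> Sigma i j = Sigma j i)
  (Hinv1 : forall i j, (i < p)%nat -> (j < p)%nat -> matmul p Sigma Sinv i j = idm i j)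
  j k : (j<p)%nat -> (k<p)%nat -> Sinv j k = Sinv k j.
Proof. intros Hj Hk.
 set (T := sumR p (fun m => sumR p (fun l => Sinv m j * Sigma m l * Sinv l k))).
 assert (E1 : T = Sinv k j).
 { unfold T. rewrite <- (sum_idm_r p k (fun m => Sinv m j) Hk). apply sumR_ext. intros m Hm.
   rewrite <- (Hinv1 m k Hm Hk). unfold matmul. rewrite <- sumR_scal. apply sumR_ext; intros; ring. }
 assert (E2 : T = Sinv j k).
 { unfold T. rewrite sumR_swap. rewrite <- (sum_idm_l p j (fun l => Sinv l k) Hj). apply sumR_ext. intros l Hl.
   replace (idm j l) with (matmul p Sigma Sinv l j).
   2:{ rewrite Hinv1 by auto. unfold idm. rewrite Nat.eqb_sym; reflexivity. }
   unfold matmul. rewrite <- sumR_scal_r. apply sumR_ext; intros m Hm. rewrite (Hsym l m) by auto. ring. }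
 congruence. Qed.

Theorem mainTheorem6
  (p : nat) (Sigma Sinv Shat : nat -> nat -> R) (b bhat : nat -> R) (lam : R)
  (Hsym : forall i j, (i < p)%nat -> (j < p)%nat -> Sigma i j = Sigma j i)
  (Hinv1 : forall i j, (i < p)%nat -> (j < p)%nat -> matmul p Sigma Sinv i j = idm i j)
  (Hinv2 : forall i j, (i < p)%nat -> (j < p)%nat -> matmul p Sinv Sigma i j = idm i j)
  (Hlam : vnorm1 p (matvec p Sinv b) * mx_inf p (msub Shat Sigma)
          + vnorm_inf p (vsub bhat b) <= lam) :
  let theta := matvec p Sinv b in
  feasible p Shat bhat lam theta /\
  (forall thh, is_solution p Shat bhat lam thh ->
     (forall w, 1 <= w ->
        vnorm p w (vsub thh theta)
        <= rpow (6 * Dfun p theta (5 * lam * mx_L1 p Sinv)) (/ w)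
           * rpow (2 * lam * mx_L1 p Sinv) (1 - / w)) /\
     vnorm_inf p (vsub thh theta) <= 2 * lam * mx_L1 p Sinv).
Proof.
 intros theta.
 assert (Nv1 : forall v, 0 <= vnorm1 p v) by (intros; apply sumR_nonneg; intros; apply Rabs_pos).
 assert (Ninf : 0 <= mx_inf p (msub Shat Sigma)) by apply maxR_ge0.
 assert (Nb : 0 <= vnorm_inf p (vsub bhat b)) by apply maxR_ge0.
 assert (NM : 0 <= mx_L1 p Sinv) by apply maxR_ge0.
 assert (Hl0 : 0 <= lam).
 { assert (0 <= vnorm1 p theta * mx_inf p (msub Shat Sigma)) by (apply Rmult_le_pos; auto). fold theta in Hlam. lra. }
 fold theta in Hlam.
 assert (Sth : forall k, (k<p)%nat -> matvec p Sigma theta k = b k).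
 { intros k Hk. unfold theta. rewrite matvec_assoc. unfold matvec at 1.
   rewrite <- (sum_idm_l p k b Hk). apply sumR_ext. intros; rewrite Hinv1; auto. }
 assert (Hbk : forall k, (k<p)%nat -> Rabs (bhat k - b k) <= vnorm_inf p (vsub bhat b)).
 { intros k Hk. apply (maxR_ge _ (fun j => Rabs (vsub bhat b j))); auto. }
 assert (Feas : feasible p Shat bhat lam theta).
 { unfold feasible. apply maxR_le; auto. intros k Hk. unfold vsub.
   replace (matvec p Shat theta k - bhat k) with (matvec p (msub Shat Sigma) theta k - (bhat k - b k))
     by (rewrite matvec_sub_m, Sth by auto; ring).
   eapply Rle_trans; [apply Rabs_triang|]. rewrite Rabs_Ropp.
   assert (H1 := matvec_bound p (msub Shat Sigma) theta k Hk). assert (H2 := Hbk k Hk).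
   rewrite Rmult_comm in H1. lra. }
 split; [exact Feas|].
 intros thh [Hf Hmin]. specialize (Hmin theta Feas).
 set (h := vsub thh theta).
 set (M := mx_L1 p Sinv) in *.
 assert (Hy : forall k, (k<p)%nat -> Rabs (matvec p Sigma h k) <= 2 * lam).
 { intros k Hk. unfold h. rewrite matvec_sub_v, Sth by auto.
   replace (matvec p Sigma thh k - b k) with
     ((matvec p Shat thh k - bhat k) - matvec p (msub Shat Sigma) thh k + (bhat k - b k))
     by (rewrite matvec_sub_m; ring).
   assert (H1 := matvec_bound p (msub Shat Sigma) thh k Hk). assert (H2 := Hbk k Hk).
   assert (H3 : Rabs (matvec p Shat thh k - bhat k) <= lam).
   { eapply Rle_trans; [|apply Hf]. apply (maxR_ge _ (fun j => Rabs (vsub (matvec p Shat thh) bhat j))); auto. }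
   assert (H4 : mx_inf p (msub Shat Sigma) * vnorm1 p thh <= mx_inf p (msub Shat Sigma) * vnorm1 p theta)
     by (apply Rmult_le_compat_l; auto).
   set (X := matvec p Shat thh k - bhat k) in *. set (Y := matvec p (msub Shat Sigma) thh k) in *.
   set (Z := bhat k - b k) in *.
   assert (T1 := Rabs_triang (X + - Y) Z).
   assert (T2 := Rabs_triang X (- Y)).
   rewrite Rabs_Ropp in T2. unfold Rminus. lra. }
 assert (Hh : forall j, (j<p)%nat -> Rabs (h j) <= 2 * lam * M).
 { intros j Hj.
   replace (h j) with (matvec p Sinv (matvec p Sigma h) j).
   2:{ rewrite matvec_assoc. unfold matvec at 1. rewrite <- (sum_idm_l p j h Hj).
       apply sumR_ext; intros; rewrite Hinv2; auto. }
   unfold matvec at 1. eapply Rle_trans; [apply Rabs_sumR|].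
   apply Rle_trans with (sumR p (fun k => Rabs (Sinv k j)) * (2 * lam)).
   - rewrite <- sumR_scal_r. apply sumR_le. intros k Hk. rewrite Rabs_mult.
     rewrite (sinv_sym p Sigma Sinv Hsym Hinv1 j k) by auto.
     apply Rmult_le_compat_l; [apply Rabs_pos|]. apply Hy; auto.
   - assert (sumR p (fun k => Rabs (Sinv k j)) <= M) by (apply (maxR_ge _ (fun k => sumR p (fun j0 => Rabs (Sinv j0 k)))); auto).
     nra. }
 assert (Hinf : vnorm_inf p h <= 2 * lam * M).
 { apply maxR_le; [apply Rmult_le_pos; [lra|exact NM]|]. auto. }
 split; [|exact Hinf].
 set (D := Dfun p theta (5 * lam * M)).
 assert (HD0 : 0 <= D) by (apply sumR_nonneg; intros; unfold Rmin; destruct (Rle_dec _ _); [apply Rabs_pos|nra]).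
 assert (H1 : vnorm1 p h <= 2 * D).
 { apply Rle_trans with (2 * D + vnorm1 p thh - vnorm1 p theta); [|lra].
   unfold vnorm1, D, Dfun.
   match goal with |- _ <= 2 * sumR p ?F + sumR p ?G - sumR p ?H =>
     rewrite <- (sumR_scal p 2 F), <- (sumR_plus p), <- (sumR_minus p) end.
   apply sumR_le.
   intros j Hj. apply cone_pt. assert (H := Hh j Hj). unfold h, vsub in H. nra. }
 intros w Hw.
 set (a := 2 * lam * M).
 set (S := sumR p (fun j => rpow (Rabs (h j)) w)).
 assert (HS0 : 0 <= S) by (apply sumR_nonneg; intros; apply rpow_nonneg).
 assert (HSle : S <= vnorm1 p h * rpow a (w - 1)).
 { unfold S, vnorm1. rewrite <- sumR_scal_r. apply sumR_le. intros j Hj. apply rpow_pt; auto.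
   split; [apply Rabs_pos|apply Hh; auto]. }
 assert (Hrhs : 0 <= rpow (6 * D) (/ w) * rpow a (1 - / w)) by (apply Rmult_le_pos; apply rpow_nonneg).
 unfold vnorm. fold S. fold a.
 assert (Hw0 : / w <> 0) by (apply Rinv_neq_0_compat; lra).
 destruct (Req_EM_T S 0) as [E|E].
 { rewrite E. unfold rpow at 1. destruct (Req_EM_T 0 0); [|lra]. destruct (Req_EM_T (/w) 0); [lra|]. exact Hrhs. }
 assert (Spos : 0 < S) by lra.
 assert (apos : 0 < a).
 { destruct (Req_EM_T a 0) as [Ea|Ea]; [|unfold a in *; nra].
   exfalso. apply E. unfold S. rewrite <- (sumR_zero p). apply sumR_ext. intros j Hj.
   assert (H := Hh j Hj). fold a in H. rewrite Ea in H. assert (Rabs (h j) = 0) by (assert (G:=Rabs_pos (h j)); lra).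
   rewrite H0. unfold rpow. destruct (Req_EM_T 0 0); [|lra]. destruct (Req_EM_T w 0); [lra|reflexivity]. }
 assert (A : rpow a (w - 1) = Rpower a (w - 1)) by (unfold rpow; destruct (Req_EM_T a 0); [lra|reflexivity]).
 rewrite A in HSle.
 assert (HA := Rpower_pos a (w - 1)).
 assert (Dpos : 0 < D).
 { destruct (Req_EM_T D 0) as [ED|ED]; [|lra]. exfalso. assert (vnorm1 p h <= 0) by lra. nra. }
 unfold rpow. destruct (Req_EM_T S 0); [lra|]. destruct (Req_EM_T (6 * D) 0); [lra|].
 destruct (Req_EM_T a 0); [lra|].
 apply Rle_trans with (Rpower (6 * D * Rpower a (w - 1)) (/ w)).
 { apply Rle_Rpower_l. left; apply Rinv_0_lt_compat; lra. split; [lra|]. nra. }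
 rewrite <- Rpower_mult_distr by (try apply Rpower_pos; lra).
 rewrite Rpower_mult. right. f_equal. f_equal. field. lra.
Qed.
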